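(* Let $t$ be the left-hand side of a CRS rule following Barendregt's naming convention, and let $\mathit{Left}(t)=(\Delta,t')$. Then $\Delta\vdash t'$ is a closed nominal term-in-context.
   Context: CRSs: meta-terms $a\mid Z(t_1,\dots,t_n)\mid[a]t\mid f\,t\mid(t_1,\dots,t_n)$ over variables (identified with nominal atoms), meta-variables $Z$ with arities and function symbols. The left-hand side $l$ of a CRS rule is a closed meta-term (no free variables) of the form $f(s_1,\dots,s_n)$ in which every meta-variable occurs only as $Z(a_1,\dots,a_n)$ with pairwise distinct bound variables. Barendregt's convention: bound variables are pairwise distinct and distinct from free variables. Nominal terms: $a\mid\pi\cdot X\mid[a]s\mid f\,s\mid(s_1,\dots,s_n)$ with finite-support permutations $\pi$; freshness contexts are sets of $a\#X$. $\Delta\vdash t$ is closed if: (1) every atom occurrence $a$ in $t$ lies under an abstraction $[a]$; (2) if $\pi\cdot X$ is in the scope of an abstraction of $\pi(a)$ then every occurrence $\pi'\cdot X$ of $X$ in $t$ is in the scope of an abstraction of $\pi'(a)$, or $a\#X\in\Delta$; (3) for two occurrences $\pi_1\cdot X,\pi_2\cdot X$ and $a$ with $\pi_1(a)\neq\pi_2(a)$, if $a$ is not abstracted in one of the occurrences then $a\#X\in\Delta$. Translation: $\Phi_t(Z)=[a_1,\dots,a_n]$ if $Z(a_1,\dots,a_n)$ is the leftmost occurrence of $Z$ in $t$. For lists of distinct variables $[a_1,\dots,a_n],[b_1,\dots,b_n]$, $\Psi([a_1,\ldots,a_n],[b_1,\dots,b_n])$ is a permutation (list of swappings) $\pi$ with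 $\pi(a_k)=b_k$ for all $k$, obtained by closing each maximal chain of the injection $a_k\mapsto b_k$ into a cycle $(c_1,\dots,c_m)$ and decomposing it as $(c_1\ c_m)\cdots(c_1\ c_2)$. $\mathit{Left}(t)=(\Delta,t')$: $t'$ is $t$ with the leftmost occurrence of each $Z(a_1,\ldots,a_n)$ replaced by the nominal variable $Z$ and every other occurrence $Z(b_1,\dots,b_n)$ replaced by $\Psi(\Phi_t(Z),[b_1,\dots,b_n])\cdot Z$, all other constructs kept unchanged; $\Delta$ contains $b\#Z$ for every occurrence of $Z$ in $t$ and every variable $b$ abstracted above that occurrence with $b\notin\Phi_t(Z)$. *)

(* Defs.v *)
From Stdlib Require Import List Arith Bool.
Import ListNotations.

Definition atom := nat.   (* CRS variables = nominal atoms *)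
Definition mvar := nat.   (* CRS meta-variables = nominal unknowns *)
Definition fsym := nat.

Inductive mterm : Type :=
| MVar  : atom -> mterm
| MMeta : mvar -> list mterm -> mterm
| MAbs  : atom -> mterm -> mterm
| MApp  : fsym -> mterm -> mterm
| MTup  : list mterm -> mterm.

Fixpoint mvar_occs (B : list atom) (t : mterm) : list (list atom * atom) :=
  match t with
  | MVar a => [(B, a)]
  | MMeta _ ts => (fix go ts := match ts with
                   | [] => [] | u :: us => mvar_occs B u ++ go us end) ts
  | MAbs a s => mvar_occs (a :: B) s
  | MApp _ s => mvar_occs B s
  | MTup ts => (fix go ts := match ts with
                | [] => [] | u :: us => mvar_occs B u ++ go us end) ts
  end.

Fixpoint meta_occs (B : list atom) (t : mterm)
  : list (list atom * mvar * list mterm) :=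
  match t with
  | MVar _ => []
  | MMeta Z ts => (B, Z, ts) :: (fix go ts := match ts with
                   | [] => [] | u :: us => meta_occs B u ++ go us end) ts
  | MAbs a s => meta_occs (a :: B) s
  | MApp _ s => meta_occs B s
  | MTup ts => (fix go ts := match ts with
                | [] => [] | u :: us => meta_occs B u ++ go us end) ts
  end.

Fixpoint mbinders (t : mterm) : list atom :=
  match t with
  | MVar _ => []
  | MMeta _ ts => (fix go ts := match ts with
                   | [] => [] | u :: us => mbinders u ++ go us end) ts
  | MAbs a s => a :: mbinders s
  | MApp _ s => mbinders s
  | MTup ts => (fix go ts := match ts with
                | [] => [] | u :: us => mbinders u ++ go us end) ts
  end.

Definition mclosed (t : mterm) : Prop :=
  forall B a, In (B, a) (mvar_occs [] t) -> In a B.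

Definition crs_lhs (t : mterm) : Prop :=
  (exists f ss, t = MApp f (MTup ss)) /\
  mclosed t /\
  (forall B Z args, In (B, Z, args) (meta_occs [] t) ->
     exists xs, args = map MVar xs /\ NoDup xs /\ (forall x, In x xs -> In x B)) /\
  (forall B1 B2 Z args1 args2,
     In (B1, Z, args1) (meta_occs [] t) -> In (B2, Z, args2) (meta_occs [] t) ->
     length args1 = length args2).

Definition barendregt (t : mterm) : Prop :=
  NoDup (mbinders t) /\
  (forall B a, In (B, a) (mvar_occs [] t) -> ~ In a B -> ~ In a (mbinders t)).

Definition perm := list (atom * atom).

Definition swap_app (s : atom * atom) (c : atom) : atom :=
  let (a, b) := s in
  if c =? a then b else if c =? b then a else c.

(** [s1; ...; sk] denotes s1 ∘ ... ∘ sk (sk applied first). *)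
Definition perm_app (p : perm) (c : atom) : atom := fold_right swap_app c p.

Inductive nterm : Type :=
| NAtom : atom -> nterm
| NSusp : perm -> mvar -> nterm
| NAbs  : atom -> nterm -> nterm
| NApp  : fsym -> nterm -> nterm
| NTup  : list nterm -> nterm.

Definition fctx := list (atom * mvar).  (* a#X  is  (a, X) *)

Fixpoint natom_occs (B : list atom) (t : nterm) : list (list atom * atom) :=
  match t with
  | NAtom a => [(B, a)]
  | NSusp _ _ => []
  | NAbs a s => natom_occs (a :: B) s
  | NApp _ s => natom_occs B s
  | NTup ts => (fix go ts := match ts with
                | [] => [] | u :: us => natom_occs B u ++ go us end) ts
  end.

Fixpoint nvar_occs (B : list atom) (t : nterm) : list (list atom * perm * mvar) :=
  match t with
  | NAtom _ => []
  | NSusp p X => [(B, p, X)]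
  | NAbs a s => nvar_occs (a :: B) s
  | NApp _ s => nvar_occs B s
  | NTup ts => (fix go ts := match ts with
                | [] => [] | u :: us => nvar_occs B u ++ go us end) ts
  end.

Definition nclosed (D : fctx) (t : nterm) : Prop :=
  (forall B a, In (B, a) (natom_occs [] t) -> In a B) /\
  (forall B1 p1 B2 p2 X a,
     In (B1, p1, X) (nvar_occs [] t) -> In (B2, p2, X) (nvar_occs [] t) ->
     In (perm_app p1 a) B1 ->
     In (perm_app p2 a) B2 \/ In (a, X) D) /\
  (forall B1 p1 B2 p2 X a,
     In (B1, p1, X) (nvar_occs [] t) -> In (B2, p2, X) (nvar_occs [] t) ->
     perm_app p1 a <> perm_app p2 a ->
     (~ In (perm_app p1 a) B1 \/ ~ In (perm_app p2 a) B2) ->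
     In (a, X) D).

Fixpoint lookup (xs ys : list atom) (x : atom) : option atom :=
  match xs, ys with
  | a :: xs', b :: ys' => if x =? a then Some b else lookup xs' ys' x
  | _, _ => None
  end.

Fixpoint walk (xs ys : list atom) (c : atom) (fuel : nat) (x : atom) : list atom :=
  match fuel with
  | 0 => []
  | S n => match lookup xs ys x with
           | Some y => if y =? c then [] else y :: walk xs ys c n y
           | None => []
           end
  end.

(** The maximal chain (or cycle) [c1; ...; cm] starting at c. *)
Definition chain (xs ys : list atom) (c : atom) : list atom :=
  c :: walk xs ys c (length xs) c.

Definition closes (xs ys : list atom) (c : atom) (C : list atom) : bool :=
  match lookup xs ys (last C c) with Some y => y =? c | None => false end.

Definition firstin (xs C : list atom) : option atom :=
  find (fun x => existsb (Nat.eqb x) C) xs.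

(** c is the chosen starting point of a maximal chain: either the start of an
    open chain (not in the image), or the first (in xs) element of a cycle. *)
Definition is_start (xs ys : list atom) (c : atom) : bool :=
  negb (existsb (Nat.eqb c) ys) ||
  (closes xs ys c (chain xs ys c) &&
   match firstin xs (chain xs ys c) with Some d => d =? c | None => false end).

(** cycle (c1 ... cm) decomposed as (c1 cm) ... (c1 c2) *)
Definition cycle_swaps (C : list atom) : perm :=
  match C with
  | [] => []
  | c1 :: rest => map (fun c => (c1, c)) (rev rest)
  end.

Definition Psi (xs ys : list atom) : perm :=
  flat_map (fun c => if is_start xs ys c then cycle_swaps (chain xs ys c) else [])
           xs.

Definition arg_atoms (args : list mterm) : list atom :=
  flat_map (fun u => match u with MVar a => [a] | _ => [] end) args.

(** Φ_t(Z): arguments of the leftmost occurrence of Z in t. *)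
Definition Phi (t : mterm) (Z : mvar) : list atom :=
  match find (fun o => match o with (_, Z', _) => Z' =? Z end) (meta_occs [] t) with
  | Some (_, _, args) => arg_atoms args
  | None => []
  end.

Fixpoint trans (phi : mvar -> list atom) (seen : list mvar) (t : mterm)
  : nterm * list mvar :=
  match t with
  | MVar a => (NAtom a, seen)
  | MMeta Z args =>
      if existsb (Nat.eqb Z) seen
      then (NSusp (Psi (phi Z) (arg_atoms args)) Z, seen)
      else (NSusp [] Z, Z :: seen)
  | MAbs a s => let (s', sn) := trans phi seen s in (NAbs a s', sn)
  | MApp f s => let (s', sn) := trans phi seen s in (NApp f s', sn)
  | MTup ts =>
      let (ts', sn) :=
        (fix go seen ts := match ts with
         | [] => ([], seen)
         | u :: us => let (u', s1) := trans phi seen u in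
                      let (us', s2) := go s1 us in (u' :: us', s2)
         end) seen ts in
      (NTup ts', sn)
  end.

Definition Delta (t : mterm) : fctx :=
  flat_map (fun o => match o with (B, Z, _) =>
              map (fun b => (b, Z))
                  (filter (fun b => negb (existsb (Nat.eqb b) (Phi t Z))) B)
            end) (meta_occs [] t).

Definition Left (t : mterm) : fctx * nterm :=
  (Delta t, fst (trans (Phi t) [] t)).

(* Main.v *)
Require Import Defs.
From Stdlib Require Import List Arith Bool Lia Permutation.
Import ListNotations.

Lemma lookup_in xs ys x y : lookup xs ys x = Some y -> In x xs /\ In y ys.
Proof.
  revert ys; induction xs as [|a xs IH]; intros [|b ys]; simpl; try discriminate.
  destruct (Nat.eqb_spec x a) as [->|Hne].
  - intros [= <-]; auto.
  - intros H; destruct (IH _ H); auto.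
Qed.

Lemma lookup_dom xs ys x : length xs = length ys -> In x xs -> exists y, lookup xs ys x = Some y.
Proof.
  revert ys; induction xs as [|a xs IH]; intros [|b ys]; simpl; try discriminate; try tauto.
  intros Hl Hin. destruct (Nat.eqb_spec x a) as [->|Hne]; eauto.
  destruct Hin as [->|Hin]; [congruence|]. apply IH; auto.
Qed.

Lemma lookup_inj xs ys a b y : NoDup ys -> lookup xs ys a = Some y -> lookup xs ys b = Some y -> a = b.
Proof.
  revert ys; induction xs as [|u xs IH]; intros [|v ys]; simpl; try discriminate.
  intros Hnd. inversion Hnd; subst.
  destruct (Nat.eqb_spec a u) as [->|Ha]; destruct (Nat.eqb_spec b u) as [->|Hb]; auto.
  - intros [= <-] H. apply lookup_in in H. tauto.
  - intros H [= <-]. apply lookup_in in H. tauto.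
  - eauto.
Qed.

Lemma lookup_surj xs ys y : NoDup xs -> length xs = length ys -> In y ys -> exists x, lookup xs ys x = Some y.
Proof.
  revert ys; induction xs as [|u xs IH]; intros [|v ys]; simpl; try discriminate; try tauto.
  intros Hnd Hl [->|Hin].
  - exists u. rewrite Nat.eqb_refl. auto.
  - inversion Hnd; subst. destruct (IH ys) as [x Hx]; auto.
    exists x. destruct (Nat.eqb_spec x u) as [->|]; auto.
    apply lookup_in in Hx. tauto.
Qed.

Inductive fpath (g : atom -> option atom) : atom -> list atom -> Prop :=
| fp_nil a : fpath g a []
| fp_cons a b l : g a = Some b -> fpath g b l -> fpath g a (b :: l).

Lemma last_nonempty {A} (z : A) l d d' : last (z :: l) d = last (z :: l) d'.
Proof. revert z; induction l as [|w l IH]; intros z; simpl; auto. apply (IH w). Qed.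

Lemma last_cons {A} (y : A) l d : last (y :: l) d = last l y.
Proof. destruct l as [|z l]; simpl; auto. apply (last_nonempty z l). Qed.

Lemma last_in {A} (l : list A) d : In (last l d) (d :: l).
Proof.
  revert d; induction l as [|z l IH]; intros d; [simpl; auto|].
  rewrite last_cons. right. apply IH.
Qed.

Lemma walk_fpath xs ys c fuel x : fpath (lookup xs ys) x (walk xs ys c fuel x).
Proof.
  revert x; induction fuel as [|n IH]; intros x; simpl; [constructor|].
  destruct (lookup xs ys x) as [y|] eqn:E; [|constructor].
  destruct (y =? c); constructor; auto.
Qed.

Lemma walk_notc xs ys c fuel x : ~ In c (walk xs ys c fuel x).
Proof.
  revert x; induction fuel as [|n IH]; intros x; simpl; [tauto|].
  destruct (lookup xs ys x) as [y|] eqn:E; [|tauto].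
  destruct (Nat.eqb_spec y c); simpl; [tauto|].
  intros [H|H]; [congruence|eapply IH; eauto].
Qed.

Lemma walk_end xs ys c fuel x :
  length (walk xs ys c fuel x) = fuel \/
  lookup xs ys (last (walk xs ys c fuel x) x) = None \/
  lookup xs ys (last (walk xs ys c fuel x) x) = Some c.
Proof.
  revert x; induction fuel as [|n IH]; intros x; cbn [walk]; [auto|].
  destruct (lookup xs ys x) as [y|] eqn:E; [|simpl; rewrite E; auto].
  destruct (Nat.eqb_spec y c) as [->|]; [simpl; rewrite E; auto|].
  rewrite last_cons. cbn [length]. destruct (IH y) as [H|[H|H]]; auto.
Qed.

Lemma walk_prefix xs ys c L : forall fuel x,
  fpath (lookup xs ys) x L -> ~ In c L -> length L <= fuel ->
  walk xs ys c fuel x = L ++ walk xs ys c (fuel - length L) (last L x).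
Proof.
  induction L as [|b L IH]; intros fuel x Hp Hc Hl.
  - simpl. rewrite Nat.sub_0_r. reflexivity.
  - inversion Hp as [|? ? ? Hg Hp']; subst. destruct fuel as [|n]; simpl in Hl; [lia|].
    cbn [walk]. rewrite Hg. destruct (Nat.eqb_spec b c) as [->|]; [simpl in Hc; tauto|].
    rewrite last_cons. cbn [length app]. replace (S n - S (length L)) with (n - length L) by lia.
    f_equal. apply IH; auto. simpl in Hc; tauto. lia.
Qed.

Lemma fpath_pred g x l b : fpath g x l -> In b l -> exists u, (u = x \/ In u l) /\ g u = Some b.
Proof.
  induction 1 as [a|a c l Hg Hp IH]; simpl; [tauto|].
  intros [->|Hin]; [eauto|]. destruct (IH Hin) as [u [Hu Hgu]]. exists u; split; auto.
  simpl; destruct Hu; auto.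
Qed.

Definition ginj (g : atom -> option atom) := forall a b y, g a = Some y -> g b = Some y -> a = b.

Lemma fpath_nodup g x l : ginj g -> fpath g x l -> ~ In x l -> NoDup (x :: l).
Proof.
  intros Hi Hp; induction Hp as [a|a b l Hg Hp IH]; intros Hx.
  - constructor; [simpl; tauto|constructor].
  - constructor; auto. apply IH. intros Hb.
    destruct (fpath_pred _ _ _ _ Hp Hb) as [u [Hu Hgu]].
    assert (u = a) by (eapply Hi; eauto). subst. simpl in Hx.
    destruct Hu as [->|Hu]; auto.
Qed.

Lemma fpath_app g l1 : forall x l2, fpath g x (l1 ++ l2) <-> fpath g x l1 /\ fpath g (last l1 x) l2.
Proof.
  induction l1 as [|b l1 IH]; intros x l2.
  - simpl. split; [intros; split; [constructor|auto]|tauto].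
  - cbn [app]. rewrite last_cons. split.
    + intros H; inversion H; subst. apply IH in H4. destruct H4. split; auto. constructor; auto.
    + intros [H1 H2]. inversion H1; subst. constructor; auto. apply IH; auto.
Qed.

Lemma fpath_dom g x l : fpath g x l -> (exists v, g (last l x) = Some v) ->
  forall u, In u (x :: l) -> exists v, g u = Some v.
Proof.
  induction 1 as [a|a b l Hg Hp IH]; simpl; intros Hl u Hu.
  - destruct Hu as [<-|[]]; auto.
  - destruct Hu as [<-|Hu]; eauto. apply IH; auto. rewrite <- last_cons with (d := a); auto.
Qed.

Lemma fpath_step g x l : forall l1 u v l2, fpath g x l -> x :: l = l1 ++ u :: v :: l2 -> g u = Some v.
Proof.
  revert x; induction l as [|b l IH]; intros x l1 u v l2 Hp Heq.
  - destruct l1 as [|? [|? ?]]; simpl in Heq; inversion Heq.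
  - inversion Hp; subst. destruct l1 as [|w l1]; simpl in Heq; inversion Heq; subst; auto.
    eapply IH; eauto.
Qed.

Lemma split_in_rest {A} (h : A) rest l1 u v l2 : h :: rest = l1 ++ u :: v :: l2 -> In v rest.
Proof.
  destruct l1 as [|w l1]; simpl; intros H; inversion H; subst; simpl; auto.
  apply in_or_app; simpl; auto.
Qed.

Lemma perm_app_app p q a : perm_app (p ++ q) a = perm_app p (perm_app q a).
Proof. unfold perm_app. apply fold_right_app. Qed.

Lemma perm_app_cons s p a : perm_app (s :: p) a = swap_app s (perm_app p a).
Proof. reflexivity. Qed.

Lemma swap_fix u v a : a <> u -> a <> v -> swap_app (u, v) a = a.
Proof. intros. simpl. destruct (Nat.eqb_spec a u); destruct (Nat.eqb_spec a v); congruence. Qed.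

Lemma perm_support p a : perm_app p a <> a -> exists u v, In (u, v) p /\ (a = u \/ a = v).
Proof.
  induction p as [|[u v] p IH]; simpl; [tauto|].
  intros H. destruct (Nat.eq_dec (perm_app p a) a) as [E|E].
  - rewrite E in H. exists u, v. split; auto. simpl in H.
    destruct (Nat.eqb_spec a u); destruct (Nat.eqb_spec a v); auto; congruence.
  - destruct (IH E) as [u' [v' [H1 H2]]]. exists u', v'; auto.
Qed.

Lemma perm_closed p C a : (forall u v, In (u, v) p -> In u C /\ In v C) -> In a C -> In (perm_app p a) C.
Proof.
  induction p as [|[u v] p IH]; simpl; intros H Ha; auto.
  assert (Hp : In (perm_app p a) C) by (apply IH; auto).
  destruct (H u v (or_introl eq_refl)).
  destruct (perm_app p a =? u); auto. destruct (perm_app p a =? v); auto.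
Qed.

Lemma cycle_swaps_snoc c rest z : cycle_swaps (c :: rest ++ [z]) = (c, z) :: cycle_swaps (c :: rest).
Proof. simpl. rewrite rev_app_distr. reflexivity. Qed.

Lemma NoDup_snoc {A} (l : list A) z : NoDup (l ++ [z]) -> NoDup l /\ ~ In z l.
Proof.
  intros H. split.
  - rewrite <- app_nil_r. eapply NoDup_remove_1; eauto.
  - intros Hz. apply (NoDup_remove_2 _ _ _ H). rewrite app_nil_r; auto.
Qed.

Lemma cyc_spec c rest : NoDup (c :: rest) ->
  (forall l1 u v l2, c :: rest = l1 ++ u :: v :: l2 -> perm_app (cycle_swaps (c :: rest)) u = v) /\
  perm_app (cycle_swaps (c :: rest)) (last rest c) = c /\
  (forall a, ~ In a (c :: rest) -> perm_app (cycle_swaps (c :: rest)) a = a).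
Proof.
  induction rest as [|z rest IH] using rev_ind; intros Hnd.
  - split; [|split].
    + intros l1 u v l2 H. destruct l1 as [|? [|? ?]]; simpl in H; inversion H.
    + reflexivity.
    + reflexivity.
  - assert (Hnd' : NoDup (c :: rest) /\ ~ In z (c :: rest)).
    { apply NoDup_snoc. rewrite app_comm_cons in Hnd. exact Hnd. }
    destruct Hnd' as [Hnd' Hz]. destruct (IH Hnd') as [Ha [Hb Hc]].
    rewrite cycle_swaps_snoc. setoid_rewrite perm_app_cons. split; [|split].
    + intros l1 u v l2 Heq.
      destruct l2 as [|w l2'] using rev_ind.
      * assert (E : (l1 ++ [u]) ++ [v] = (c :: rest) ++ [z]) by (rewrite <- app_assoc; simpl; rewrite <- Heq; reflexivity).
        apply app_inj_tail in E. destruct E as [E1 E2]; subst v.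
        assert (Hu : u = last rest c).
        { rewrite <- last_cons with (d := c). rewrite <- E1. rewrite last_last. reflexivity. }
        subst u. rewrite Hb. simpl. rewrite Nat.eqb_refl. reflexivity.
      * clear IHl2'.
        assert (E : (l1 ++ u :: v :: l2') ++ [w] = (c :: rest) ++ [z]) by (rewrite <- app_assoc; simpl; rewrite <- Heq; reflexivity).
        apply app_inj_tail in E. destruct E as [E1 E2].
        rewrite (Ha _ _ _ _ (eq_sym E1)).
        apply swap_fix.
        -- intros ->. inversion Hnd'; subst. apply H1. eapply split_in_rest; symmetry; eauto.
        -- intros ->. apply Hz. right. eapply split_in_rest; symmetry; eauto.
    + rewrite last_last. rewrite Hc; auto. simpl.
      rewrite Nat.eqb_refl. destruct (Nat.eqb_spec z c); auto.
    + intros a Ha'. rewrite Hc.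
      * apply swap_fix; intros ->; apply Ha'; simpl; auto. right; apply in_or_app; simpl; auto.
      * intros H; apply Ha'. destruct H; [left; auto|right; apply in_or_app; auto].
Qed.

Lemma cyc_closed C a : In a C -> In (perm_app (cycle_swaps C) a) C.
Proof.
  intros Ha. apply perm_closed; auto. destruct C as [|c rest]; simpl; [tauto|].
  intros u v Huv. apply in_map_iff in Huv. destruct Huv as [w [[= <- <-] Hw]].
  split; auto. right. apply in_rev; auto.
Qed.

Lemma last_app {A} (l1 l2 : list A) d : last (l1 ++ l2) d = last l2 (last l1 d).
Proof.
  revert d; induction l1 as [|a l1 IH]; intros d; [reflexivity|].
  cbn [app]. rewrite !last_cons. apply IH.
Qed.

Lemma existsb_in x C : existsb (Nat.eqb x) C = true <-> In x C.
Proof.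
  rewrite existsb_exists. split.
  - intros [y [Hy E]]. apply Nat.eqb_eq in E. subst; auto.
  - intros H. exists x. rewrite Nat.eqb_refl. auto.
Qed.

Lemma find_ext_eq {A} (p q : A -> bool) l : (forall x, p x = q x) -> find p l = find q l.
Proof. intros H; induction l as [|a l IH]; simpl; auto. rewrite H, IH. reflexivity. Qed.

Lemma find_two {A} (l : list A) p q a b : NoDup l -> find p l = Some a -> find q l = Some b ->
  p b = true -> q a = true -> a = b.
Proof.
  induction l as [|x l IH]; simpl; [discriminate|]. intros Hnd.
  inversion Hnd as [|? ? Hx Hnd']; subst.
  destruct (p x) eqn:Ep; destruct (q x) eqn:Eq.
  - congruence.
  - intros [= <-] Hf Hpb Hqa. congruence.
  - intros Hf [= <-] Hpb Hqa. congruence.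
  - eauto.
Qed.

Lemma ginj_lookup xs ys : NoDup ys -> ginj (lookup xs ys).
Proof. intros H a b y; apply lookup_inj; auto. Qed.

Lemma chain_nodup xs ys c : NoDup ys -> NoDup (chain xs ys c).
Proof.
  intros H. unfold chain. apply (fpath_nodup (lookup xs ys)).
  - apply (ginj_lookup xs ys); auto.
  - apply walk_fpath.
  - apply walk_notc.
Qed.

Lemma chain_step xs ys c x y : NoDup ys ->
  In x (chain xs ys c) -> lookup xs ys x = Some y ->
  perm_app (cycle_swaps (chain xs ys c)) x = y.
Proof.
  intros Hy Hin Hl.
  pose proof (chain_nodup xs ys c Hy) as Hnd.
  pose proof (cyc_spec _ _ Hnd) as [Ha [Hb _]].
  unfold chain in *. set (W := walk xs ys c (length xs) c) in *.
  destruct (in_split _ _ Hin) as [l1 [l2 Heq]].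
  destruct l2 as [|v l2].
  - assert (Hx : last W c = x).
    { rewrite <- (last_cons c W c). rewrite Heq. apply last_last. }
    rewrite <- Hx in *. rewrite Hb.
    destruct (walk_end xs ys c (length xs) c) as [E|[E|E]]; fold W in E.
    + exfalso.
      assert (Hinc : incl (c :: W) xs).
      { intros u Hu. destruct (fpath_dom _ _ _ (walk_fpath xs ys c (length xs) c) (ex_intro _ y Hl) u Hu) as [v' Hv'].
        apply lookup_in in Hv'. tauto. }
      pose proof (NoDup_incl_length Hnd Hinc). simpl in H. lia.
    + congruence.
    + congruence.
  - rewrite (Ha _ _ _ _ Heq).
    pose proof (fpath_step _ _ _ _ _ _ _ (walk_fpath xs ys c (length xs) c) Heq). congruence.
Qed.

Lemma chain_support xs ys c a : In a (chain xs ys c) -> a = c \/ In a ys.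
Proof.
  unfold chain. intros [<-|H]; auto. right.
  destruct (fpath_pred _ _ _ _ (walk_fpath xs ys c (length xs) c) H) as [u [_ Hu]].
  apply lookup_in in Hu; tauto.
Qed.

Lemma is_start_cycle xs ys c : is_start xs ys c = true -> In c ys ->
  lookup xs ys (last (chain xs ys c) c) = Some c /\ firstin xs (chain xs ys c) = Some c.
Proof.
  unfold is_start, closes. intros H Hc. apply (proj2 (existsb_in c ys)) in Hc. rewrite Hc in H. cbn [negb orb] in H.
  apply andb_true_iff in H. destruct H as [H1 H2].
  destruct (lookup xs ys (last (chain xs ys c) c)) as [y|]; [|discriminate].
  destruct (firstin xs (chain xs ys c)) as [d|]; [|discriminate].
  apply Nat.eqb_eq in H1, H2. subst. auto.
Qed.

Lemma back_common g (Hi : ginj g) c Wc d Wd : fpath g c Wc -> fpath g d Wd ->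
  forall l1 a l2 m1 m2, c :: Wc = l1 ++ a :: l2 -> d :: Wd = m1 ++ a :: m2 ->
  In c (d :: Wd) \/ In d (c :: Wc).
Proof.
  intros Hc Hd l1. induction l1 as [|u l1 IH] using rev_ind; intros a l2 m1 m2 E1 E2.
  - simpl in E1. inversion E1; subst. left. rewrite E2. apply in_or_app; simpl; auto.
  - destruct m1 as [|u' m1] using rev_ind.
    + simpl in E2. inversion E2; subst. right. rewrite E1. apply in_or_app; simpl; auto.
    + clear IHm1. rewrite <- app_assoc in E1, E2. simpl in E1, E2.
      pose proof (fpath_step _ _ _ _ _ _ _ Hc E1).
      pose proof (fpath_step _ _ _ _ _ _ _ Hd E2).
      assert (u = u') by (eapply Hi; eauto). subst.
      eapply (IH u' (a :: l2) m1 (a :: m2)); eauto.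
Qed.

Lemma back_cycle g (Hi : ginj g) c Wc d Wd : fpath g c Wc -> g (last Wc c) = Some c ->
  fpath g d Wd -> forall m1 e m2, d :: Wd = m1 ++ e :: m2 -> In e (c :: Wc) -> In d (c :: Wc).
Proof.
  intros Hc Hcl Hd m1. induction m1 as [|u m1 IH] using rev_ind; intros e m2 E He.
  - simpl in E. inversion E; subst; auto.
  - rewrite <- app_assoc in E. simpl in E.
    pose proof (fpath_step _ _ _ _ _ _ _ Hd E) as Hu.
    assert (Hu' : exists u', In u' (c :: Wc) /\ g u' = Some e).
    { destruct He as [<-|He].
      - exists (last Wc c). split; auto. apply last_in.
      - destruct (fpath_pred _ _ _ _ Hc He) as [u' [H1 H2]]. exists u'. split; auto.
        destruct H1 as [->|]; simpl; auto. }
    destruct Hu' as [u' [Hin Hg]].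
    assert (u = u') by (eapply Hi; eauto). subst.
    eapply (IH u' (e :: m2)); eauto.
Qed.

Lemma start_in_chain xs ys c d : NoDup xs -> NoDup ys ->
  is_start xs ys c = true -> is_start xs ys d = true -> In c (chain xs ys d) -> c = d.
Proof.
  intros Hx Hy Hc Hd Hin.
  assert (Hi := ginj_lookup xs ys Hy).
  destruct (Nat.eq_dec c d) as [|Hne]; auto.
  assert (Hcy : In c ys).
  { destruct (chain_support _ _ _ _ Hin); auto. congruence. }
  destruct (is_start_cycle xs ys c Hc Hcy) as [Hcl Hfc].
  assert (Hdc : In d (chain xs ys c)).
  { unfold chain in *. destruct (in_split _ _ Hin) as [m1 [m2 E]].
    eapply (back_cycle _ Hi c _ d _ (walk_fpath _ _ _ _ _)).
    - rewrite <- (last_cons c _ c). exact Hcl.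
    - apply walk_fpath.
    - exact E.
    - left; auto. }
  assert (Hdy : In d ys).
  { destruct (chain_support _ _ _ _ Hdc); auto. congruence. }
  destruct (is_start_cycle xs ys d Hd Hdy) as [_ Hfd].
  unfold firstin in *.
  apply (find_two xs _ _ c d Hx Hfc Hfd); apply existsb_in; auto.
Qed.

Lemma chain_disjoint xs ys c d a : NoDup xs -> NoDup ys ->
  is_start xs ys c = true -> is_start xs ys d = true ->
  In a (chain xs ys c) -> In a (chain xs ys d) -> c = d.
Proof.
  intros Hx Hy Hc Hd Ha Hb.
  destruct (in_split _ _ Ha) as [l1 [l2 E1]].
  destruct (in_split _ _ Hb) as [m1 [m2 E2]].
  unfold chain in *.
  destruct (back_common _ (ginj_lookup xs ys Hy) _ _ _ _ (walk_fpath _ _ _ _ _) (walk_fpath _ _ _ _ _) _ _ _ _ _ E1 E2) as [H|H].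
  - apply (start_in_chain xs ys c d); auto.
  - symmetry. apply (start_in_chain xs ys d c); auto.
Qed.

Lemma rotate g h l1 d l2 : fpath g h (l1 ++ d :: l2) -> g (last (l1 ++ d :: l2) h) = Some h ->
  fpath g d (l2 ++ h :: l1) /\ g (last (l2 ++ h :: l1) d) = Some d.
Proof.
  intros Hp Hl. apply fpath_app in Hp. destruct Hp as [H1 H2].
  inversion H2 as [|? ? ? Hg Hp2]; subst.
  rewrite last_app, last_cons in Hl.
  split.
  - apply fpath_app. split; auto. constructor; auto.
  - rewrite last_app, last_cons. auto.
Qed.

Lemma walk_stop xs ys c m w : lookup xs ys w = Some c -> walk xs ys c m w = [].
Proof. intros H. destruct m; simpl; auto. rewrite H, Nat.eqb_refl. reflexivity. Qed.

Lemma cycle_start xs ys z L : NoDup ys ->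
  fpath (lookup xs ys) z L -> NoDup (z :: L) -> lookup xs ys (last L z) = Some z ->
  incl (z :: L) xs -> forall x, In x (z :: L) ->
  exists c, In c xs /\ is_start xs ys c = true /\ In x (chain xs ys c).
Proof.
  intros Hy Hp Hnd Hl Hinc x Hx.
  set (p := fun u => existsb (Nat.eqb u) (z :: L)).
  destruct (find p xs) as [d|] eqn:Ef.
  2:{ exfalso. assert (Hz : In z xs) by (apply Hinc; simpl; auto).
      pose proof (find_none _ _ Ef z Hz). unfold p in H. simpl in H. rewrite Nat.eqb_refl in H. discriminate. }
  destruct (find_some _ _ Ef) as [Hdx Hpd]. unfold p in Hpd. apply existsb_in in Hpd.
  destruct (in_split _ _ Hpd) as [l1 [l2 E]].
  assert (HR : exists R, fpath (lookup xs ys) d R /\ lookup xs ys (last R d) = Some d /\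
                         Permutation (z :: L) (d :: R)).
  { destruct l1 as [|h l1].
    - simpl in E. inversion E; subst. exists l2. auto.
    - simpl in E. inversion E; subst.
      destruct (rotate _ _ _ _ _ Hp Hl) as [H1 H2].
      exists (l2 ++ h :: l1). split; auto. split; auto.
      change (Permutation ((h :: l1) ++ d :: l2) ((d :: l2) ++ h :: l1)). apply Permutation_app_comm. }
  destruct HR as [R [HRp [HRl HRperm]]].
  assert (HRnd : NoDup (d :: R)) by (eapply Permutation_NoDup; eauto).
  assert (Hlen : length (z :: L) <= length xs) by (apply NoDup_incl_length; auto).
  assert (HlR : length R = length L) by (apply Permutation_length in HRperm; simpl in HRperm; lia).
  assert (Hch : chain xs ys d = d :: R).
  { unfold chain. inversion HRnd; subst.
    rewrite (walk_prefix xs ys d R (length xs) d HRp); auto.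
    - rewrite walk_stop; auto. rewrite app_nil_r. reflexivity.
    - simpl in Hlen. lia. }
  exists d. split; auto. split.
  - unfold is_start, closes. rewrite Hch. rewrite last_cons, HRl, Nat.eqb_refl.
    unfold firstin. rewrite (find_ext_eq _ p).
    + rewrite Ef, Nat.eqb_refl. apply orb_true_r.
    + intros u. unfold p. destruct (existsb (Nat.eqb u) (d :: R)) eqn:E1; symmetry.
      * apply existsb_in. apply existsb_in in E1. eapply Permutation_in; [symmetry; eauto|]; auto.
      * apply not_true_iff_false. intros E2. apply existsb_in in E2.
        apply (Permutation_in _ HRperm) in E2. apply existsb_in in E2. congruence.
  - rewrite Hch. eapply Permutation_in; eauto.
Qed.

Lemma back_search xs ys x : NoDup xs -> NoDup ys -> length xs = length ys -> forall k z L,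
  fpath (lookup xs ys) z L -> last L z = x -> NoDup (z :: L) -> incl (z :: L) xs ->
  length (z :: L) + k > length xs ->
  exists c, In c xs /\ is_start xs ys c = true /\ In x (chain xs ys c).
Proof.
  intros Hx Hy Hlen k. induction k as [|k IH]; intros z L Hp Hlast Hnd Hinc Hk.
  - pose proof (NoDup_incl_length Hnd Hinc). lia.
  - assert (HL : length (z :: L) <= length xs) by (apply NoDup_incl_length; auto).
    destruct (in_dec Nat.eq_dec z ys) as [Hz|Hz].
    + destruct (lookup_surj xs ys z Hx Hlen Hz) as [z' Hz'].
      destruct (in_dec Nat.eq_dec z' (z :: L)) as [Hin|Hin].
      * destruct (in_split _ _ Hin) as [l1 [l2 E]].
        destruct l2 as [|v l2].
        -- assert (Hl : last L z = z').
           { rewrite <- (last_cons z L z). rewrite E. apply last_last. }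
           apply (cycle_start xs ys z L Hy Hp Hnd); auto.
           ++ congruence.
           ++ rewrite <- Hlast. apply last_in.
        -- exfalso. pose proof (fpath_step _ _ _ _ _ _ _ Hp E) as Hs.
           rewrite Hz' in Hs. inversion Hs; subst.
           apply split_in_rest in E. inversion Hnd; auto.
      * apply (IH z' (z :: L)).
        -- constructor; auto.
        -- rewrite last_cons. auto.
        -- constructor; auto.
        -- intros u [<-|Hu]; [apply lookup_in in Hz'; tauto|apply Hinc; auto].
        -- simpl in *. lia.
    + exists z. split; [apply Hinc; simpl; auto|]. split.
      * unfold is_start. apply orb_true_iff. left. apply negb_true_iff.
        apply not_true_iff_false. intros E. apply existsb_in in E. tauto.
      * unfold chain. inversion Hnd; subst.
        rewrite (walk_prefix xs ys z L (length xs) z Hp); auto.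
        -- try rewrite <- Hlast. destruct (last_in L z) as [H|H]; [left; auto|right; apply in_or_app; auto].
        -- simpl in HL. lia.
Qed.

Lemma exists_start xs ys x : NoDup xs -> NoDup ys -> length xs = length ys -> In x xs ->
  exists c, In c xs /\ is_start xs ys c = true /\ In x (chain xs ys c).
Proof.
  intros Hx Hy Hl Hin.
  apply (back_search xs ys x Hx Hy Hl (length xs) x []).
  - constructor.
  - reflexivity.
  - constructor; [simpl; tauto|constructor].
  - intros u [<-|[]]; auto.
  - simpl; lia.
Qed.

Definition blk xs ys := fun c => if is_start xs ys c then cycle_swaps (chain xs ys c) else [].

Lemma blk_fix xs ys c L b : NoDup xs -> NoDup ys -> ~ In c L -> is_start xs ys c = true ->
  In b (chain xs ys c) -> perm_app (flat_map (blk xs ys) L) b = b.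
Proof.
  intros Hx Hy. induction L as [|e L IH]; intros HcL Hc Hb; [reflexivity|].
  simpl flat_map. rewrite perm_app_app. rewrite IH; auto; [|simpl in HcL; tauto].
  unfold blk. destruct (is_start xs ys e) eqn:He; [|reflexivity].
  pose proof (chain_nodup xs ys e Hy) as Hnd. unfold chain in Hnd |- *.
  apply (cyc_spec _ _ Hnd). intros Hbe.
  assert (e = c) by (eapply (chain_disjoint xs ys e c b); eauto).
  subst. simpl in HcL; tauto.
Qed.

Lemma blk_run xs ys c L b : NoDup xs -> NoDup ys -> NoDup L -> In c L -> is_start xs ys c = true ->
  In b (chain xs ys c) ->
  perm_app (flat_map (blk xs ys) L) b = perm_app (cycle_swaps (chain xs ys c)) b.
Proof.
  intros Hx Hy. induction L as [|e L IH]; intros HL HcL Hc Hb; [destruct HcL|].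
  inversion HL as [|? ? HeL HL']; subst.
  simpl flat_map. rewrite perm_app_app.
  destruct HcL as [<-|HcL].
  - rewrite (blk_fix xs ys e L b); auto. unfold blk. rewrite Hc. reflexivity.
  - rewrite IH; auto.
    assert (Hb' := cyc_closed _ _ Hb).
    unfold blk. destruct (is_start xs ys e) eqn:He; [|reflexivity].
    pose proof (chain_nodup xs ys e Hy) as Hnd. unfold chain in Hnd, Hb' |- *.
    apply (cyc_spec _ _ Hnd). intros Hbe.
    assert (e = c) by (eapply (chain_disjoint xs ys e c); eauto).
    subst. tauto.
Qed.

Lemma Psi_in xs ys a y : NoDup xs -> NoDup ys -> length xs = length ys ->
  In a xs -> lookup xs ys a = Some y -> perm_app (Psi xs ys) a = y.
Proof.
  intros Hx Hy Hl Ha Hla.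
  destruct (exists_start xs ys a Hx Hy Hl Ha) as [c [Hc [Hs Hac]]].
  replace (Psi xs ys) with (flat_map (blk xs ys) xs) by reflexivity.
  rewrite (blk_run xs ys c xs a); auto.
  apply chain_step; auto.
Qed.

Lemma Psi_in' xs ys a : NoDup xs -> NoDup ys -> length xs = length ys ->
  In a xs -> In (perm_app (Psi xs ys) a) ys.
Proof.
  intros Hx Hy Hl Ha. destruct (lookup_dom xs ys a Hl Ha) as [y Hy'].
  rewrite (Psi_in xs ys a y); auto. apply lookup_in in Hy'. tauto.
Qed.

Lemma Psi_supp xs ys a : perm_app (Psi xs ys) a <> a -> In a xs \/ In a ys.
Proof.
  intros H. destruct (perm_support _ _ H) as [u [v [Huv Ha]]].
  unfold Psi in Huv. apply in_flat_map in Huv. destruct Huv as [d [Hd Huv]].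
  destruct (is_start xs ys d); [|destruct Huv].
  assert (Hc : In u (chain xs ys d) /\ In v (chain xs ys d)).
  { destruct (chain xs ys d) as [|c rest]; simpl in Huv; [tauto|].
    apply in_map_iff in Huv. destruct Huv as [w [[= <- <-] Hw]].
    split; simpl; auto. right. apply in_rev; auto. }
  destruct Hc as [Hu Hv].
  destruct Ha as [->| ->]; [destruct (chain_support _ _ _ _ Hu)|destruct (chain_support _ _ _ _ Hv)];
    subst; auto.
Qed.

Definition mterm_ind2 (P : mterm -> Prop)
  (Hv : forall a, P (MVar a))
  (Hm : forall Z ts, Forall P ts -> P (MMeta Z ts))
  (Ha : forall a s, P s -> P (MAbs a s))
  (Hp : forall f s, P s -> P (MApp f s))
  (Ht : forall ts, Forall P ts -> P (MTup ts)) : forall t, P t :=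
  fix F t := match t with
  | MVar a => Hv a
  | MMeta Z ts => Hm Z ts ((fix G ts : Forall P ts := match ts with
                             | [] => Forall_nil P
                             | u :: us => Forall_cons u (F u) (G us) end) ts)
  | MAbs a s => Ha a s (F s)
  | MApp f s => Hp f s (F s)
  | MTup ts => Ht ts ((fix G ts : Forall P ts := match ts with
                             | [] => Forall_nil P
                             | u :: us => Forall_cons u (F u) (G us) end) ts)
  end.

Fixpoint trl (phi : mvar -> list atom) (seen : list mvar) (ts : list mterm) : list nterm * list mvar :=
  match ts with
  | [] => ([], seen)
  | u :: us => let (u', s1) := trans phi seen u in
               let (us', s2) := trl phi s1 us in (u' :: us', s2)
  end.

Lemma trans_tup phi ts : forall seen,
  trans phi seen (MTup ts) = (NTup (fst (trl phi seen ts)), snd (trl phi seen ts)).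
Proof.
  induction ts as [|u us IH]; intros seen; [reflexivity|].
  specialize (IH (snd (trans phi seen u))).
  simpl trans in *. simpl trl.
  destruct (trans phi seen u) as [u' s1]. cbn [snd] in IH.
  match type of IH with context [let (_, _) := ?e in _] => destruct e as [a b] end.
  destruct (trl phi s1 us) as [c d]. cbn in *. congruence.
Qed.

Lemma trans_abs phi seen a s : trans phi seen (MAbs a s) = (NAbs a (fst (trans phi seen s)), snd (trans phi seen s)).
Proof. simpl. destruct (trans phi seen s); reflexivity. Qed.

Lemma trans_app phi seen f s : trans phi seen (MApp f s) = (NApp f (fst (trans phi seen s)), snd (trans phi seen s)).
Proof. simpl. destruct (trans phi seen s); reflexivity. Qed.

Lemma trl_cons phi seen u us : trl phi seen (u :: us) =
  (fst (trans phi seen u) :: fst (trl phi (snd (trans phi seen u)) us), snd (trl phi (snd (trans phi seen u)) us)).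
Proof. simpl. destruct (trans phi seen u) as [a b]. simpl. destruct (trl phi b us); reflexivity. Qed.

Lemma meta_occs_tup_cons B u us : meta_occs B (MTup (u :: us)) = meta_occs B u ++ meta_occs B (MTup us).
Proof. reflexivity. Qed.
Lemma meta_occs_meta B Z ts : meta_occs B (MMeta Z ts) = (B, Z, ts) :: meta_occs B (MTup ts).
Proof. reflexivity. Qed.
Lemma mvar_occs_tup_cons B u us : mvar_occs B (MTup (u :: us)) = mvar_occs B u ++ mvar_occs B (MTup us).
Proof. reflexivity. Qed.
Lemma natom_occs_tup_cons B u us : natom_occs B (NTup (u :: us)) = natom_occs B u ++ natom_occs B (NTup us).
Proof. reflexivity. Qed.
Lemma nvar_occs_tup_cons B u us : nvar_occs B (NTup (u :: us)) = nvar_occs B u ++ nvar_occs B (NTup us).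
Proof. reflexivity. Qed.

Lemma seen_mono phi u : forall seen Z, In Z seen -> In Z (snd (trans phi seen u)).
Proof.
  induction u as [a|Z' ts _|a s IH|f s IH|ts IH] using mterm_ind2; intros seen Z H.
  - exact H.
  - simpl. destruct (existsb (Nat.eqb Z') seen); simpl; auto.
  - rewrite trans_abs. apply IH; auto.
  - rewrite trans_app. apply IH; auto.
  - rewrite trans_tup. simpl snd. revert seen H.
    induction ts as [|u us IHl]; intros seen H; [exact H|].
    inversion IH as [|? ? Hu Hus]; subst.
    rewrite trl_cons. simpl snd. apply IHl; auto.
Qed.

Definition NN B0 u := forall B Z ts, In (B, Z, ts) (meta_occs B0 u) -> meta_occs B (MTup ts) = [].

Lemma seen_occ phi u : forall seen B0 Z B args, NN B0 u -> In (B, Z, args) (meta_occs B0 u) ->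
  In Z (snd (trans phi seen u)).
Proof.
  induction u as [a|Z' ts _|a s IH|f s IH|ts IH] using mterm_ind2; intros seen B0 Z B args HN H.
  - destruct H.
  - rewrite meta_occs_meta in H. rewrite (HN B0 Z' ts) in H by (rewrite meta_occs_meta; left; auto).
    destruct H as [[= <- <- <-]|[]].
    simpl. destruct (existsb (Nat.eqb Z') seen) eqn:E; simpl; auto.
    apply existsb_exists in E. destruct E as [x [Hx Ex]]. apply Nat.eqb_eq in Ex. subst; auto.
  - rewrite trans_abs. simpl in H. eapply IH; eauto.
  - rewrite trans_app. simpl in H. eapply IH; eauto.
  - rewrite trans_tup. simpl snd. revert seen H HN.
    induction ts as [|u us IHl]; intros seen H HN; [destruct H|].
    inversion IH as [|? ? Hu Hus]; subst.
    rewrite trl_cons. simpl snd. rewrite meta_occs_tup_cons in H.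
    assert (HN1 : NN B0 u) by (intros B1 Z1 ts1 ?; apply (HN B1 Z1 ts1); rewrite meta_occs_tup_cons; apply in_or_app; auto).
    assert (HN2 : NN B0 (MTup us)) by (intros B1 Z1 ts1 ?; apply (HN B1 Z1 ts1); rewrite meta_occs_tup_cons; apply in_or_app; auto).
    apply in_app_or in H. destruct H as [H|H].
    + clear IHl.
      assert (Hs := Hu seen B0 Z B args HN1 H).
      pose proof (seen_mono phi (MTup us) _ _ Hs) as Hm. rewrite trans_tup in Hm. exact Hm.
    + apply IHl; auto.
Qed.

Lemma natom_mvar phi u : forall seen B0 B a,
  In (B, a) (natom_occs B0 (fst (trans phi seen u))) -> In (B, a) (mvar_occs B0 u).
Proof.
  induction u as [a'|Z' ts _|a' s IH|f s IH|ts IH] using mterm_ind2; intros seen B0 B a H.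
  - exact H.
  - simpl in H. destruct (existsb (Nat.eqb Z') seen); destruct H.
  - rewrite trans_abs in H. simpl in *. eapply IH; eauto.
  - rewrite trans_app in H. simpl in *. eapply IH; eauto.
  - rewrite trans_tup in H. simpl fst in H. revert seen H.
    induction ts as [|u us IHl]; intros seen H; [destruct H|].
    inversion IH as [|? ? Hu Hus]; subst.
    rewrite trl_cons in H. simpl fst in H. rewrite natom_occs_tup_cons in H.
    rewrite mvar_occs_tup_cons. apply in_app_or in H. apply in_or_app.
    destruct H as [H|H]; [left; eapply Hu; eauto|right; eapply IHl; eauto].
Qed.

Definition isZ (Z : mvar) (o : list atom * mvar * list mterm) : bool :=
  match o with (_, Z', _) => Z' =? Z end.

Lemma find_app_l {A} (p : A -> bool) l1 l2 o : find p l1 = Some o -> find p (l1 ++ l2) = Some o.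
Proof. induction l1 as [|a l1 IH]; simpl; [discriminate|]. destruct (p a); auto. Qed.

Lemma find_app_r {A} (p : A -> bool) l1 l2 : find p l1 = None -> find p (l1 ++ l2) = find p l2.
Proof. induction l1 as [|a l1 IH]; simpl; auto. destruct (p a); [discriminate|auto]. Qed.

Lemma nvar_spec phi u : forall seen B0 B p Z, NN B0 u ->
  In (B, p, Z) (nvar_occs B0 (fst (trans phi seen u))) ->
  exists args, In (B, Z, args) (meta_occs B0 u) /\
    (p = Psi (phi Z) (arg_atoms args) \/
     (p = [] /\ ~ In Z seen /\ find (isZ Z) (meta_occs B0 u) = Some (B, Z, args))).
Proof.
  induction u as [a'|Z' ts _|a' s IH|f s IH|ts IH] using mterm_ind2; intros seen B0 B p Z HN H.
  - destruct H.
  - exists ts. simpl in H. rewrite meta_occs_meta.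
    destruct (existsb (Nat.eqb Z') seen) eqn:E; simpl in H; destruct H as [Heq|[]];
      inversion Heq; subst; (split; [left; reflexivity|]).
    { left; reflexivity. }
    right. split; auto. split.
    + intros Hin. apply not_true_iff_false in E. apply E. apply existsb_exists. exists Z.
      rewrite Nat.eqb_refl; auto.
    + simpl. rewrite Nat.eqb_refl. reflexivity.
  - rewrite trans_abs in H. simpl in *. eapply IH; eauto.
  - rewrite trans_app in H. simpl in *. eapply IH; eauto.
  - rewrite trans_tup in H. simpl fst in H. revert seen H HN.
    induction ts as [|u us IHl]; intros seen H HN; [destruct H|].
    inversion IH as [|? ? Hu Hus]; subst.
    assert (HN1 : NN B0 u) by (intros B1 Z1 ts1 ?; apply (HN B1 Z1 ts1); rewrite meta_occs_tup_cons; apply in_or_app; auto).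
    assert (HN2 : NN B0 (MTup us)) by (intros B1 Z1 ts1 ?; apply (HN B1 Z1 ts1); rewrite meta_occs_tup_cons; apply in_or_app; auto).
    rewrite trl_cons in H. simpl fst in H. rewrite nvar_occs_tup_cons in H.
    rewrite meta_occs_tup_cons. apply in_app_or in H.
    destruct H as [H|H].
    + destruct (Hu seen B0 B p Z HN1 H) as [args [H1 H2]].
      exists args. split; [apply in_or_app; auto|].
      destruct H2 as [H2|[H2 [H3 H4]]]; auto. right. split; auto. split; auto.
      apply find_app_l; auto.
    + destruct (IHl Hus _ H HN2) as [args [H1 H2]].
      exists args. split; [apply in_or_app; auto|].
      destruct H2 as [H2|[H2 [H3 H4]]]; auto. right. split; auto.
      assert (Hnone : find (isZ Z) (meta_occs B0 u) = None).
      { destruct (find (isZ Z) (meta_occs B0 u)) as [[[B' Z''] args']|] eqn:Ef; auto.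
        exfalso. apply find_some in Ef. destruct Ef as [Hin Hz]. simpl in Hz.
        apply Nat.eqb_eq in Hz. subst Z''.
        apply H3. eapply seen_occ; eauto. }
      split.
      * intros Hs. apply H3. apply seen_mono. exact Hs.
      * rewrite find_app_r; auto.
Qed.

Lemma meta_occs_mvars B xs : meta_occs B (MTup (map MVar xs)) = [].
Proof. induction xs as [|x xs IH]; [reflexivity|]. simpl map. rewrite meta_occs_tup_cons, IH. reflexivity. Qed.

Lemma arg_atoms_mvars xs : arg_atoms (map MVar xs) = xs.
Proof. induction xs as [|x xs IH]; [reflexivity|]. simpl. f_equal. exact IH. Qed.

Lemma Phi_find t Z B args : find (isZ Z) (meta_occs [] t) = Some (B, Z, args) -> Phi t Z = arg_atoms args.
Proof.
  intros H. unfold Phi.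
  match goal with |- context [find ?q ?l] =>
    assert (E : find q l = Some (B, Z, args)) by exact H; rewrite E end.
  reflexivity.
Qed.

Theorem mainTheorem12 (t : mterm) :
  crs_lhs t -> barendregt t ->
  nclosed (fst (Left t)) (snd (Left t)).
Proof.
  intros [_ [Hcl [Hargs Harity]]] _.
  unfold Left. cbn [fst snd].
  assert (HN : NN [] t).
  { intros B Z ts Hin. destruct (Hargs B Z ts Hin) as [xs [-> _]]. apply meta_occs_mvars. }
  assert (HPhi : forall B Z args, In (B, Z, args) (meta_occs [] t) ->
            NoDup (Phi t Z) /\ length (Phi t Z) = length args).
  { intros B Z args Hin.
    destruct (find (isZ Z) (meta_occs [] t)) as [[[B' Z'] args']|] eqn:Ef.
    - pose proof Ef as Ef'. apply find_some in Ef'. destruct Ef' as [Hin' Hz].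
      simpl in Hz. apply Nat.eqb_eq in Hz. subst Z'.
      rewrite (Phi_find _ _ _ _ Ef).
      destruct (Hargs _ _ _ Hin') as [xs [-> [Hnd _]]].
      rewrite arg_atoms_mvars. split; auto.
      rewrite <- (Harity _ _ _ _ _ Hin' Hin). rewrite length_map. reflexivity.
    - exfalso. apply (find_none _ _ Ef) in Hin. simpl in Hin. rewrite Nat.eqb_refl in Hin. discriminate. }
  assert (Hocc : forall B p Z, In (B, p, Z) (nvar_occs [] (fst (trans (Phi t) [] t))) ->
     (forall a, In a (Phi t Z) -> In (perm_app p a) B) /\
     (forall a, ~ In a (Phi t Z) -> perm_app p a <> a -> In a B) /\
     (forall a, In a B -> ~ In a (Phi t Z) -> In (a, Z) (Delta t))).
  { intros B p Z Hin.
    destruct (nvar_spec (Phi t) t [] [] B p Z HN Hin) as [args [Hm Hp]].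
    destruct (Hargs _ _ _ Hm) as [ys [Eargs [Hndy Hincl]]].
    destruct (HPhi _ _ _ Hm) as [HndPhi HlPhi].
    assert (O3 : forall a, In a B -> ~ In a (Phi t Z) -> In (a, Z) (Delta t)).
    { intros a Ha Hna. unfold Delta. apply in_flat_map. exists (B, Z, args). split; auto.
      apply in_map_iff. exists a. split; auto. apply filter_In. split; auto.
      apply negb_true_iff. apply not_true_iff_false. intros E. apply existsb_exists in E.
      destruct E as [x [Hx Ex]]. apply Nat.eqb_eq in Ex. subst. tauto. }
    split; [|split]; auto.
    - destruct Hp as [-> | [-> [_ Hf]]].
      + intros a Ha. apply Hincl. rewrite Eargs, arg_atoms_mvars.
        apply Psi_in'; auto. rewrite HlPhi, Eargs, length_map. reflexivity.
      + intros a Ha. rewrite (Phi_find _ _ _ _ Hf), Eargs, arg_atoms_mvars in Ha.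
        apply Hincl; exact Ha.
    - destruct Hp as [-> | [-> _]].
      + intros a Hna Hne. apply Psi_supp in Hne. rewrite Eargs, arg_atoms_mvars in Hne.
        destruct Hne as [H|H]; [tauto|auto].
      + intros a _ Hne. exfalso. apply Hne. reflexivity. }
  split; [|split].
  - intros B a H. apply (Hcl B a). eapply natom_mvar; eauto.
  - intros B1 p1 B2 p2 X a H1 H2 Hp1.
    destruct (Hocc _ _ _ H1) as [A1 [A2 A3]].
    destruct (Hocc _ _ _ H2) as [C1 [C2 C3]].
    destruct (in_dec Nat.eq_dec a (Phi t X)) as [Ha|Ha].
    + left. apply C1; auto.
    + right. apply A3; auto.
      destruct (Nat.eq_dec (perm_app p1 a) a) as [E|E].
      * rewrite <- E; auto.
      * apply A2; auto.
  - intros B1 p1 B2 p2 X a H1 H2 Hne Hnot.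
    destruct (Hocc _ _ _ H1) as [A1 [A2 A3]].
    destruct (Hocc _ _ _ H2) as [C1 [C2 C3]].
    destruct (in_dec Nat.eq_dec a (Phi t X)) as [Ha|Ha].
    + exfalso. destruct Hnot as [Hn|Hn]; apply Hn; auto.
    + destruct (Nat.eq_dec (perm_app p1 a) a) as [E|E].
      * apply C3; auto. apply C2; auto. congruence.
      * apply A3; auto.
Qed.
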